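(* Consider the model and the LinUCB-d algorithm described in the context, under assumptions (A1) and (A2). Let $\{\Phi_b\}$ be any choice of matrices as in the context, and let $\mathcal{C}_b^{(i)}$ be defined as there. Then for any arms $a,b\in[K]$ with $b\neq a$, any $i\in\{1,\dots,d\}$, and every $t\ge1$, \[ \bar N_t(a,\mathcal{C}_b^{(i)})\le\frac{8\alpha_t^2}{\Delta^2}\,d\log\Big(\frac{d+t}{d}\Big). \]
   Context: Model: $K$ arms $[K]$; each arm $a$ has an unknown parameter $\boldsymbol{\theta}(a)\in\mathbb{R}^d$; context set $\mathcal{C}$ and known feature vectors $\mathbf{x}(a,c)\in\mathbb{R}^d$. At each time $t$ the learner observes $c_t$, pulls $a_t$, observes $y_t=r(a_t,c_t)+\eta_t$ with $r(a,c)=\boldsymbol{\theta}(a)^\intercal\mathbf{x}(a,c)$. $\mathcal{C}_a=\{c: r(a,c)>r(b,c)\ \forall b\neq a\}$, $\mathcal{X}_a=\{\mathbf{x}(a,c):c\in\mathcal{C}_a\}$. (A1) $\|\boldsymbol{\theta}(a)\|_2\le s$, $\|\mathbf{x}(a,c)\|_2\le l$. (A2) There is $\Delta>0$ with $r(a,c)-r(b,c)\ge\Delta$ for all $a$, $b\ne a$, $c\in\mathcal{C}_a$. Algorithm LinUCB-d: $f(t)=1+t\log^2 t$, $\alpha_t=ls+\sqrt{(2+d)\log f(t)}$; $\mathbf{V}_t(a)=l^2\mathbf{I}_d+\sum_{\tau<t:\,a_\tau=a}\mathbf{x}(a,c_\tau)\mathbf{x}(a,c_\tau)^\intercal$, $\mathbf{b}_t(a)=\sum_{\tau<t:\,a_\tau=a}y_\tau\mathbf{x}(a,c_\tau)$,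 $\hat r_t(a)=\mathbf{x}(a,c_t)^\intercal\mathbf{V}_t(a)^{-1}\mathbf{b}_t(a)$, $\hat\sigma_t(a)=\sqrt{\mathbf{x}(a,c_t)^\intercal\mathbf{V}_t(a)^{-1}\mathbf{x}(a,c_t)}$; it pulls $a_t\in\arg\max_a\hat r_t(a)+\alpha_t\hat\sigma_t(a)$. Bad estimates: a time $\tau$ is bad if there is an arm $a'$ with $|\hat r_\tau(a')-r(a',c_\tau)|>\alpha_\tau\hat\sigma_\tau(a')$; $\mathcal{B}_t$ is the set of bad times in $[1,t)$. Groups: for each $b$, $\Phi_b$ is a $d\times d$ matrix with columns $\phi_b^{(1)},\dots,\phi_b^{(d)}\in\mathcal{X}_b$ and $\lambda_{\min}(\Phi_b^\intercal\Phi_b)>0$. $\mathcal{X}_b^{(i)}$ is the set of $\mathbf{x}\in\mathcal{X}_b$ with $\mathbf{x}^\intercal\phi_b^{(i)}/\|\phi_b^{(i)}\|_2<\mathbf{x}^\intercal\phi_b^{(j)}/\|\phi_b^{(j)}\|_2$ for all $j<i$ and $\le$ for all $j>i$; and $\mathcal{C}_b^{(i)}=\{c\in\mathcal{C}_b:\mathbf{x}(b,c)\in\mathcal{X}_b^{(i)}\}$. Counts: $\bar N_t(a,\mathcal{C}_b^{(i)})$ is the number of times $\tau$ with $1\le\tau<t$, $a_\tau=a$, $c_\tau\in\mathcal{C}_b^{(i)}$ and $\tau\notin\mathcal{B}_t$. *)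

(* Defs.v *)
From HB Require Import structures.
From mathcomp Require Import all_boot all_order all_algebra.
From mathcomp Require Import reals exp.
Set Implicit Arguments.
Unset Strict Implicit.
Unset Printing Implicit Defensive.
Import Order.TTheory GRing.Theory Num.Theory.
Local Open Scope ring_scope.

Definition dotv (R : realType) (d : nat) (u v : 'cV[R]_d) : R :=
  (u^T *m v) ord0 ord0.
Definition norm2 (R : realType) (d : nat) (v : 'cV[R]_d) : R :=
  Num.sqrt (dotv v v).

Section LinUCBd.
Variables (R : realType) (K d : nat) (C : Type).
Variable x : 'I_K -> C -> 'cV[R]_d.
Variable theta : 'I_K -> 'cV[R]_d.
Variables (l s : R).
(* realized contexts c_t, noise eta_t, pulled arms a_t (times t >= 1) *)
Variable cs : nat -> C.
Variable eta : nat -> R.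
Variable acts : nat -> 'I_K.

Definition rew (a : 'I_K) (c : C) : R := dotv (theta a) (x a c).

Definition yobs (t : nat) : R := rew (acts t) (cs t) + eta t.

Definition Vmat (t : nat) (a : 'I_K) : 'M[R]_d :=
  l ^+ 2 *: 1%:M +
  \sum_(1 <= tau < t | acts tau == a) (x a (cs tau) *m (x a (cs tau))^T).

Definition bvec (t : nat) (a : 'I_K) : 'cV[R]_d :=
  \sum_(1 <= tau < t | acts tau == a) (yobs tau *: x a (cs tau)).

Definition rhat (t : nat) (a : 'I_K) : R :=
  dotv (x a (cs t)) (invmx (Vmat t a) *m bvec t a).

Definition sighat (t : nat) (a : 'I_K) : R :=
  Num.sqrt (dotv (x a (cs t)) (invmx (Vmat t a) *m x a (cs t))).

Definition ffun (t : nat) : R := 1 + t%:R * (ln (t%:R : R)) ^+ 2.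
Definition alpha (t : nat) : R := l * s + Num.sqrt ((2 + d%:R) * ln (ffun t)).

Definition linucb_d_rule : Prop :=
  forall t : nat, (1 <= t)%N -> forall a' : 'I_K,
    rhat t a' + alpha t * sighat t a' <=
    rhat t (acts t) + alpha t * sighat t (acts t).

Definition bad (tau : nat) : bool :=
  [exists a' : 'I_K,
     alpha tau * sighat tau a' < `|rhat tau a' - rew a' (cs tau)|].

Definition Cb (b : 'I_K) (c : C) : bool :=
  [forall b' : 'I_K, (b' != b) ==> (rew b' c < rew b c)].

Definition projPhi (Phi : 'I_K -> 'M[R]_d) (b : 'I_K) (j : 'I_d)
    (v : 'cV[R]_d) : R :=
  dotv v (col j (Phi b)) / norm2 (col j (Phi b)).

(* C_b^(i) (indices 0-based: 'I_d stands for {1,...,d}) *)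
Definition Cbi (Phi : 'I_K -> 'M[R]_d) (b : 'I_K) (i : 'I_d) (c : C) : bool :=
  Cb b c &&
  [forall j : 'I_d,
     ((j < i)%N ==> (projPhi Phi b i (x b c) < projPhi Phi b j (x b c))) &&
     ((i < j)%N ==> (projPhi Phi b i (x b c) <= projPhi Phi b j (x b c)))].

(* \bar N_t(a, P): number of 1 <= tau < t with a_tau = a, c_tau in P,
   tau not in B_t (i.e. tau not bad) *)
Definition Nbar (t : nat) (a : 'I_K) (P : C -> bool) : nat :=
  count (fun tau => [&& acts tau == a, P (cs tau) & ~~ bad tau])
        (iota 1 t.-1).

End LinUCBd.

(* Main.v *)
From HB Require Import structures.
From mathcomp Require Import all_boot all_order all_algebra.
From mathcomp Require Import reals exp.
From mathcomp Require Import ring lra.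
Require Import Defs.
Set Implicit Arguments.
Unset Strict Implicit.
Unset Printing Implicit Defensive.
Import Order.TTheory GRing.Theory Num.Theory.
Local Open Scope ring_scope.

Section Hadamard.
Variable R : realType.

Definition qf n (M : 'M[R]_n) (v : 'cV[R]_n) : R := (v^T *m M *m v) 0 0.
Definition PD n (M : 'M[R]_n) : Prop :=
  M^T = M /\ forall v, v != 0 -> 0 < qf M v.

Lemma hadamard n (M : 'M[R]_n) : PD M ->
  0 < \det M /\ ln (\det M) <= \sum_i ln (M i i).
Proof.
elim: n M => [|n IH] M [Msym Mpd].
  by rewrite det_mx00 ln1 big_ord0; split.
pose M' : 'M[R]_(1 + n) := M.
pose c := ulsubmx M'. pose u := ursubmx M'. pose v := dlsubmx M'.
pose A := drsubmx M'.
have M'sym : M'^T = M' by [].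
have vu : v = u^T by rewrite /v /u trmx_ursub M'sym.
have Asym : A^T = A by rewrite /A trmx_drsub M'sym.
have qfM : forall (w1 : 'cV_1) (w2 : 'cV_n), qf M' (col_mx w1 w2) =
  ((w1^T *m c + w2^T *m v) *m w1 + (w1^T *m u + w2^T *m A) *m w2) 0 0.
  move=> w1 w2; rewrite /qf.
  have -> : M' = block_mx c u v A by rewrite submxK.
  by rewrite tr_col_mx mul_row_block mul_row_col.
have Apd : PD A.
  split=> // w w0.
  have : (col_mx 0 w : 'cV_(1 + n)) != 0 by rewrite col_mx_eq0 eqxx (negbTE w0).
  move=> /Mpd.
  rewrite qfM /qf !trmx0 !mul0mx !mulmx0 !add0r. by [].
have [detA lnA] := IH A Apd.
have Aunit : A \in unitmx by rewrite unitmxE unitfE gt_eqF.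
pose y := invmx A *m v.
pose sc := c - u *m y.
have Ay : A *m y = v by rewrite /y mulmxA mulmxV // mul1mx.
have yA : y^T *m A = u by rewrite -Asym -trmx_mul Ay vu trmxK.
have uy0 : 0 <= (u *m y) 0 0.
  have -> : (u *m y) 0 0 = qf A y by rewrite /qf -yA.
  have [->|y0] := eqVneq y 0; first by rewrite /qf mulmx0 mxE.
  by apply/ltW/(proj2 Apd).
have sc0 : 0 < sc 0 0.
  have : (col_mx 1%:M (- y) : 'cV_(1 + n)) != 0.
    by rewrite col_mx_eq0 -scalemx1 scalemx_eq0 oner_eq0 /= -[_ == 0]negbK -(mxrank_eq0) mxrank1.
  move=> /Mpd.
  rewrite qfM trmx1 !mul1mx mulmx1 linearN /= !mulNmx yA.
  have -> : y^T *m v = u *m y by rewrite -Ay mulmxA yA.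
  by rewrite subrr mul0mx addr0.
have factor : M' = block_mx 1%:M (u *m invmx A) 0 1%:M *m block_mx sc 0 v A.
  rewrite mulmx_block !mul1mx !mul0mx ?mulmx0 !add0r ?addr0 mulmxKV //.
  by rewrite /sc -mulmxA -/y subrK submxK.
have detM : \det M' = sc 0 0 * \det A.
  by rewrite factor det_mulmx det_ublock det_lblock !det1 !mul1r det_mx11.
have c0 : sc 0 0 <= c 0 0.
  by rewrite /sc mxE [X in _ + X]mxE gerDl oppr_le0.
change (0 < \det M' /\ ln (\det M') <= \sum_(i < 1 + n) ln (M' i i)).
split; first by rewrite detM mulr_gt0.
rewrite detM lnM ?posrE // big_split_ord /=.
rewrite big_ord1; apply: lerD.
  have cM : c 0 0 = M' (lshift n ord0) (lshift n ord0) by rewrite /c !mxE.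
  by rewrite ler_ln ?posrE // -cM; [exact: c0 | exact: lt_le_trans c0].
by apply: le_trans lnA _; apply: ler_sum => i _; rewrite /A !mxE.
Qed.


Lemma det_1rank n (u : 'cV[R]_n) (w : 'rV[R]_n) :
  \det (1%:M + u *m w) = 1 + (w *m u) 0 0.
Proof.
pose P : 'M[R]_(1 + n) := block_mx 1%:M (- w) u 1%:M.
have e1 : P = block_mx 1%:M 0 u 1%:M *m block_mx 1%:M (- w) 0 (1%:M + u *m w).
  rewrite mulmx_block !mul1mx !mul0mx !mulmx1 ?add0r ?addr0 ?mulmxN.
  by rewrite [X in block_mx _ _ _ X]addrC addrK.
have e2 : P = block_mx 1%:M (- w) 0 1%:M *m block_mx (1%:M + w *m u) 0 u 1%:M.
  rewrite mulmx_block !mul1mx !mul0mx !mulmx1 ?mulmx0 ?add0r ?addr0 ?mulNmx.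
  by rewrite addrK.
have := congr1 determinant e2; rewrite e1 !det_mulmx det_lblock det_ublock.
rewrite det_ublock det_lblock !det1 !mul1r !mulr1 => ->.
by rewrite det_mx11 !mxE.
Qed.

Lemma det_rank1 n (V : 'M[R]_n) (g : 'cV[R]_n) : V \in unitmx ->
  \det (V + g *m g^T) = \det V * (1 + (g^T *m (invmx V *m g)) 0 0).
Proof.
move=> Vu.
have -> : V + g *m g^T = V *m (1%:M + (invmx V *m g) *m g^T).
  by rewrite mulmxDr mulmx1 !mulmxA mulmxV // mul1mx.
by rewrite det_mulmx det_1rank.
Qed.

End Hadamard.

Section Dot.
Variable R : realType.

Lemma dotvE n (u v : 'cV[R]_n) : dotv u v = \sum_i u i 0 * v i 0.
Proof. by rewrite /dotv mxE; apply: eq_bigr => i _; rewrite mxE. Qed.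

Lemma dotvC n (u v : 'cV[R]_n) : dotv u v = dotv v u.
Proof. by rewrite !dotvE; apply: eq_bigr => i _; rewrite mulrC. Qed.

Lemma dotv_ge0 n (v : 'cV[R]_n) : 0 <= dotv v v.
Proof. by rewrite dotvE sumr_ge0 // => i _; rewrite -expr2 sqr_ge0. Qed.

Lemma dotv_gt0 n (v : 'cV[R]_n) : v != 0 -> 0 < dotv v v.
Proof.
move=> v0; rewrite lt_def dotv_ge0 andbT; apply: contra v0 => /eqP.
rewrite dotvE => /psumr_eq0P H.
have {}H := H (fun i _ => ltac:(by rewrite -expr2 sqr_ge0)).
apply/eqP/matrixP => i j.
rewrite (ord1 j) mxE; have /eqP := H i isT.
by rewrite mulf_eq0 orbb => /eqP.
Qed.

Lemma dotv0l n (v : 'cV[R]_n) : dotv 0 v = 0.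
Proof. by rewrite dotvE big1 // => i _; rewrite mxE mul0r. Qed.

Lemma qf_dotv n (M : 'M[R]_n) v : qf M v = dotv v (M *m v).
Proof. by rewrite /qf /dotv mulmxA. Qed.

End Dot.

Section Vs.
Variables (R : realType) (d : nat) (l : R) (g : nat -> 'cV[R]_d) (P : nat -> bool).

Definition Vs t : 'M[R]_d :=
  l ^+ 2 *: 1%:M + \sum_(1 <= tau < t | P tau) (g tau *m (g tau)^T).
Definition sig2 t : R := dotv (g t) (invmx (Vs t) *m g t).

Lemma Vs_sym t : (Vs t)^T = Vs t.
Proof.
rewrite /Vs linearD /= linearZ /= trmx1 linear_sum /=.
by congr (_ + _); apply: eq_bigr => i _; rewrite trmx_mul trmxK.
Qed.

Lemma qf_Vs t v : qf (Vs t) v =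
  l ^+ 2 * dotv v v + \sum_(1 <= tau < t | P tau) (dotv (g tau) v) ^+ 2.
Proof.
rewrite /qf /Vs mulmxDr mulmxDl mxE; congr (_ + _).
  by rewrite -scalemxAr mulmx1 -scalemxAl mxE.
rewrite mulmx_sumr mulmx_suml summxE; apply: eq_bigr => i _.
rewrite mulmxA -mulmxA mxE big_ord1 expr2.
by rewrite -/(dotv v (g i)) -/(dotv (g i) v) dotvC.
Qed.

Lemma Vs_PD t : 0 < l -> PD (Vs t).
Proof.
move=> l0; split; first exact: Vs_sym.
move=> v v0; rewrite qf_Vs; apply: (@lt_le_trans _ _ (l ^+ 2 * dotv v v)).
  by rewrite mulr_gt0 ?exprn_gt0 ?dotv_gt0.
by rewrite lerDl sumr_ge0 // => i _; rewrite sqr_ge0.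
Qed.

Lemma Vs_det t : 0 < l -> 0 < \det (Vs t).
Proof. by move=> l0; case: (hadamard (Vs_PD t l0)). Qed.

Lemma Vs_unit t : 0 < l -> Vs t \in unitmx.
Proof. by move=> l0; rewrite unitmxE unitfE gt_eqF // Vs_det. Qed.

Lemma Vs_rec t : (1 <= t)%N ->
  Vs t.+1 = Vs t + (if P t then g t *m (g t)^T else 0).
Proof.
move=> t1; rewrite /Vs -addrA; congr (_ + _).
by rewrite big_mkcond big_nat_recr //= -big_mkcond.
Qed.

Lemma Vs1 : Vs 1 = (l ^+ 2)%:M.
Proof. by rewrite /Vs big_geq // addr0 scalemx1. Qed.

Lemma Vs_diag t i : Vs t i i = l ^+ 2 + \sum_(1 <= tau < t | P tau) (g tau i 0) ^+ 2.
Proof.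
rewrite /Vs mxE [X in X + _]mxE mxE eqxx mulr1; congr (_ + _).
rewrite summxE; apply: eq_bigr => k _.
by rewrite mxE big_ord1 mxE expr2.
Qed.


Hypothesis l0 : 0 < l.
Hypothesis gl : forall tau, dotv (g tau) (g tau) <= l ^+ 2.

Lemma sig2_bd t : 0 <= sig2 t <= 1.
Proof.
pose V := Vs t; pose y := invmx V *m g t.
have Vy : V *m y = g t by rewrite /y mulmxA mulmxV ?Vs_unit // mul1mx.
have q1 : sig2 t = qf V y.
  by rewrite /sig2 -/V -/y qf_dotv Vy dotvC.
have q2 : l ^+ 2 * dotv y y <= sig2 t.
  by rewrite q1 /V qf_Vs lerDl sumr_ge0 // => i _; rewrite sqr_ge0.
have q3 : 2 * l ^+ 2 * sig2 t <= dotv (g t) (g t) + l ^+ 2 * l ^+ 2 * dotv y y.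
  rewrite /sig2 -/V -/y !dotvE !mulr_sumr -big_split /=.
  by apply: ler_sum => i _; have := sqr_ge0 (g t i 0 - l ^+ 2 * y i 0); nra.
have L0 : 0 < l ^+ 2 by rewrite exprn_gt0.
have Y0 := dotv_ge0 y.
have q4 : l ^+ 2 * (l ^+ 2 * dotv y y) <= l ^+ 2 * sig2 t by rewrite ler_pM2l.
have q5 : l ^+ 2 * sig2 t <= l ^+ 2 * 1.
  have := gl t; rewrite mulrA in q4; lra.
rewrite ler_pM2l // in q5; rewrite q5 andbT.
apply: le_trans q2; rewrite mulr_ge0 // ltW //.
Qed.

Lemma ln_lb (u : R) : 0 <= u <= 1 -> u <= 2 * ln (1 + u).
Proof.
case/andP=> u0 u1.
have h : ln (1 + - (u / (1 + u))) <= - (u / (1 + u)).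
  apply: le_ln1Dx; rewrite ltrN2 ltr_pdivrMr; lra.
have e : 1 + - (u / (1 + u)) = (1 + u)^-1 by field; lra.
rewrite e lnV ?posrE in h; last lra.
have : u / (1 + u) <= ln (1 + u) by lra.
rewrite ler_pdivrMr; last lra.
nra.
Qed.

Lemma tele t : (1 <= t)%N ->
  \sum_(1 <= tau < t | P tau) sig2 tau <= 2 * (ln (\det (Vs t)) - ln (\det (Vs 1))).
Proof.
elim: t => // t IH t1.
case: (posnP t) => [->|tpos]; first by rewrite big_geq // subrr mulr0.
rewrite big_mkcond big_nat_recr //= -big_mkcond Vs_rec //.
have {}IH := IH tpos.
case: (P t); last by rewrite !addr0.
rewrite det_rank1 ?Vs_unit // -/(dotv (g t) (invmx (Vs t) *m g t)) -/(sig2 t).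
have /andP [s0 s1] := sig2_bd t.
rewrite lnM ?posrE ?Vs_det //; last by lra.
have := ln_lb (sig2_bd t); lra.
Qed.

Lemma logdet t : (0 < d)%N -> (1 <= t)%N ->
  ln (\det (Vs t)) <= d%:R * ln (l ^+ 2 * ((d%:R + t%:R) / d%:R)).
Proof.
move=> d0 t1.
have dR : (0 : R) < d%:R by rewrite ltr0n.
pose m := l ^+ 2 * ((d%:R + t%:R) / d%:R).
have m0 : 0 < m by rewrite /m mulr_gt0 ?exprn_gt0 // divr_gt0 // ltr_wpDr.
have Vii : forall i, 0 < Vs t i i.
  by move=> i; rewrite Vs_diag ltr_wpDr ?exprn_gt0 // sumr_ge0 // => k _; rewrite sqr_ge0.
apply: le_trans (proj2 (hadamard (Vs_PD t l0))) _.
apply: (@le_trans _ _ (\sum_i (ln m + (Vs t i i / m - 1)))).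
  apply: ler_sum => i _.
  have := @le_ln1Dx _ (Vs t i i / m - 1).
  have -> : 1 + (Vs t i i / m - 1) = Vs t i i / m by ring.
  rewrite ln_div ?posrE // ?Vii //.
  have : 0 < Vs t i i / m by rewrite divr_gt0 ?Vii.
  move=> h1 h2; have := h2 ltac:(lra); lra.
rewrite big_split /= sumr_const card_ord -/m mulr_natl gerDl.
rewrite big_split /= sumrN sumr_const card_ord -mulr_suml subr_le0.
rewrite ler_pdivrMr // mulr_natl -mulr_natr.
have -> : \sum_i Vs t i i = d%:R * l ^+ 2 + \sum_(1 <= tau < t | P tau) dotv (g tau) (g tau).
  under eq_bigr => i _ do rewrite Vs_diag.
  rewrite big_split /= sumr_const card_ord mulr_natl; congr (_ + _).
  rewrite exchange_big /=; apply: eq_bigr => tau _; rewrite dotvE.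
  by apply: eq_bigr => i _; rewrite expr2.
apply: (@le_trans _ _ (d%:R * l ^+ 2 + t%:R * l ^+ 2)).
  rewrite lerD2l; apply: (@le_trans _ _ (\sum_(1 <= tau < t) l ^+ 2)).
    rewrite big_mkcond /=; apply: ler_sum => tau _.
    by case: (P tau) => //; rewrite exprn_ge0 // ltW.
  rewrite sumr_const_nat -[l ^+ 2 *+ _]mulr_natl.
  by rewrite ler_wpM2r ?exprn_ge0 ?ltW // ltr_nat subn1 ltn_predL.
have -> : m * d%:R = l ^+ 2 * (d%:R + t%:R) by rewrite /m -mulrA divfK ?gt_eqF.
rewrite mulrDr [_ * l ^+ 2]mulrC [t%:R * _]mulrC.
exact: le_refl.
Qed.

Lemma potential t : (0 < d)%N -> (1 <= t)%N ->
  \sum_(1 <= tau < t | P tau) sig2 tau <= 2 * d%:R * ln ((d%:R + t%:R) / d%:R).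
Proof.
move=> d0 t1; apply: le_trans (tele t1) _.
have dR : (0 : R) < d%:R by rewrite ltr0n.
have := logdet d0 t1.
rewrite Vs1 det_scalar lnXn ?exprn_gt0 // lnM ?posrE ?exprn_gt0 //; last first.
  by rewrite divr_gt0 // ltr_wpDr.
rewrite -mulr_natl; nra.
Qed.

End Vs.

Lemma alpha_mono (R : realType) (d : nat) (l s : R) tau t :
  (1 <= tau <= t)%N -> alpha d l s tau <= alpha d l s t.
Proof.
case/andP=> t1 tt.
have f1 : forall n : nat, (1 <= n)%N -> 1 <= ffun R n.
  move=> n n1; rewrite /ffun lerDl mulr_ge0 ?sqr_ge0 //.
have ffpos : forall n : nat, (1 <= n)%N -> 0 < ffun R n.
  by move=> n n1; apply: lt_le_trans (f1 n n1).
have tR : (1 : R) <= tau%:R by rewrite ler1n.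
have tR' : (tau%:R : R) <= t%:R by rewrite ler_nat.
rewrite /alpha lerD2l ler_sqrt; last first.
  by rewrite mulr_ge0 // ?ln_ge0 ?f1 // ?(leq_trans t1) // addr_ge0.
rewrite ler_wpM2l ?addr_ge0 // ler_ln ?posrE ?ffpos // ?(leq_trans t1) //.
rewrite /ffun lerD2l; apply: ler_pM => //; first by rewrite sqr_ge0.
have l0 : 0 <= ln (tau%:R : R) by rewrite ln_ge0.
have l1 : ln (tau%:R : R) <= ln (t%:R) by rewrite ler_ln ?posrE; lra.
by rewrite !expr2 ler_pM.
Qed.

Theorem lemma9 (R : realType) (K d : nat) (C : Type)
    (x : 'I_K -> C -> 'cV[R]_d) (theta : 'I_K -> 'cV[R]_d)
    (l s Delta : R) (cs : nat -> C) (eta : nat -> R) (acts : nat -> 'I_K)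
    (Phi : 'I_K -> 'M[R]_d) :
  (* (A1) *)
  (forall a, norm2 (theta a) <= s) ->
  (forall a c, norm2 (x a c) <= l) ->
  (* (A2) *)
  0 < Delta ->
  (forall (a b : 'I_K) (c : C), b != a -> Cb x theta a c ->
     Delta <= rew x theta a c - rew x theta b c) ->
  (* the arms are pulled by LinUCB-d *)
  linucb_d_rule x theta l s cs eta acts ->
  (* choice of Phi_b: columns in X_b, lambda_min(Phi_b^T Phi_b) > 0 *)
  (forall (b : 'I_K) (j : 'I_d),
     exists c, Cb x theta b c /\ col j (Phi b) = x b c) ->
  (forall (b : 'I_K) (e : R), eigenvalue ((Phi b)^T *m Phi b) e -> 0 < e) ->
  forall (a b : 'I_K), b != a -> forall (i : 'I_d) (t : nat), (1 <= t)%N ->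
    (Nbar x theta l s cs eta acts t a (Cbi x theta Phi b i))%:R
      <= 8 * alpha d l s t ^+ 2 / Delta ^+ 2 * d%:R
         * ln ((d%:R + t%:R) / d%:R).
Proof.
move=> Hth Hx D0 A2 rule _ _ a b ba i t t1.
pose Q := fun tau => [&& acts tau == a, Cbi x theta Phi b i (cs tau)
                       & ~~ bad x theta l s cs eta acts tau].
pose g := fun tau => x a (cs tau).
pose Pp := fun tau => acts tau == a.
have sigE : forall tau, sighat x l cs acts tau a = Num.sqrt (sig2 l g Pp tau) by [].
have key : forall tau, (1 <= tau)%N -> Q tau ->
    Delta <= 2 * alpha d l s tau * sighat x l cs acts tau a.
  move=> tau tau1 /and3P [/eqP atau /andP [Cbtau _] nb].
  have good : forall a', `|rhat x theta l cs eta acts tau a' - rew x theta a' (cs tau)|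
       <= alpha d l s tau * sighat x l cs acts tau a'.
    move=> a'; move: nb; rewrite /bad negb_exists => /forallP /(_ a').
    by rewrite -leNgt.
  have r := rule tau tau1 b; rewrite atau in r.
  have A := A2 b a (cs tau) (ltac:(by rewrite eq_sym)) Cbtau.
  have /ler_normlP [g1 g2] := good a; have /ler_normlP [g3 g4] := good b.
  rewrite /alpha in r g1 g2 g3 g4 *; lra.
have NE : Nbar x theta l s cs eta acts t a (Cbi x theta Phi b i) = count Q (iota 1 t.-1) by [].
rewrite NE.
have rhs0 : 0 <= 8 * alpha d l s t ^+ 2 / Delta ^+ 2 * d%:R * ln ((d%:R + t%:R) / d%:R).
  case: (posnP d) => [->|dpos]; first by rewrite mulr0 mul0r.
  have dR : (0 : R) < d%:R by rewrite ltr0n.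
  apply: mulr_ge0; last by rewrite ln_ge0 // ler_pdivlMr // mul1r lerDl.
  apply: mulr_ge0; last by rewrite ler0n.
  apply: divr_ge0; last exact: sqr_ge0.
  by apply: mulr_ge0; [|exact: sqr_ge0].
case: (posnP (count Q (iota 1 t.-1))) => [->//|Npos].
have [tau0 tau0in Qtau0] : exists2 tau, tau \in iota 1 t.-1 & Q tau.
  by apply/hasP; rewrite has_count.
have tau0b : (1 <= tau0 <= t)%N.
  move: tau0in; rewrite mem_iota => /andP [-> h] /=.
  by apply: ltnW; move: h; rewrite add1n prednK.
have k0 := key tau0 (proj1 (andP tau0b)) Qtau0.
have sg0 := sqrtr_ge0 (sig2 l g Pp tau0).
rewrite sigE in k0.
have at0 : 0 < alpha d l s tau0 by nra.
have atm := alpha_mono d l s tau0b.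
have sgpos : 0 < sig2 l g Pp tau0.
  by rewrite -sqrtr_gt0; nra.
have gne : g tau0 != 0.
  apply/negP => /eqP g0; move: sgpos; by rewrite /sig2 g0 dotv0l ltxx.
have dpos : (0 < d)%N.
  case: (pickP (fun i : 'I_d => g tau0 i 0 != 0)) => [i0 _|H].
    exact: leq_ltn_trans (leq0n i0) (ltn_ord i0).
  exfalso; move/negP: gne; apply; apply/eqP/matrixP => p q.
  by rewrite (ord1 q) mxE; move/negbFE/eqP: (H p).
have gl : forall tau, dotv (g tau) (g tau) <= l ^+ 2.
  move=> tau; rewrite -(sqr_sqrtr (dotv_ge0 _)) !expr2.
  by apply: ler_pM; rewrite ?sqrtr_ge0 //; apply: Hx.
have lge0 : 0 <= l by apply: le_trans (Hx a (cs tau0)); apply: sqrtr_ge0.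
have l0 : 0 < l.
  rewrite lt_def lge0 andbT; apply/eqP => l0.
  have := gl tau0; have := dotv_gt0 gne; rewrite l0 expr2 mulr0; lra.
have dR : (0 : R) < d%:R by rewrite ltr0n.
pose c := Delta ^+ 2 / (4 * alpha d l s t ^+ 2).
have c0 : 0 < c by rewrite divr_gt0 ?exprn_gt0 // mulr_gt0 // exprn_gt0 //; lra.
have pot := potential Pp l0 gl dpos t1.
have -> : 8 * alpha d l s t ^+ 2 / Delta ^+ 2 * d%:R * ln ((d%:R + t%:R) / d%:R)
    = (2 * d%:R * ln ((d%:R + t%:R) / d%:R)) / c.
  by rewrite /c; field; rewrite !gt_eqF //; lra.
rewrite ler_pdivlMr //; apply: le_trans pot.
rewrite -sum1_count natr_sum mulr_suml.
apply: (@le_trans _ _ (\sum_(tau <- iota 1 t.-1 | Q tau) sig2 l g Pp tau)).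
  rewrite big_seq_cond [X in _ <= X]big_seq_cond; apply: ler_sum => tau /andP [tin Qt].
  have taub : (1 <= tau <= t)%N.
    move: tin; rewrite mem_iota => /andP [-> h] /=.
    by apply: ltnW; move: h; rewrite add1n prednK.
  have k := key tau (proj1 (andP taub)) Qt.
  have sg := sqrtr_ge0 (sig2 l g Pp tau).
  rewrite sigE in k.
  have am := alpha_mono d l s taub.
  have /andP [s0 _] := sig2_bd Pp l0 gl tau.
  rewrite mul1r /c ler_pdivrMr; last by rewrite mulr_gt0 // exprn_gt0 //; lra.
  rewrite -(sqr_sqrtr s0).
  set S := Num.sqrt _ in k sg *.
  have k' : Delta <= 2 * alpha d l s t * S.
    apply: (le_trans k); apply: ler_wpM2r => //; apply: ler_wpM2l => //.
  have := ler_pM (ltW D0) (ltW D0) k' k'.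
  have -> : S ^+ 2 * (4 * alpha d l s t ^+ 2) =
    (2 * alpha d l s t * S) * (2 * alpha d l s t * S) by ring.
  by rewrite expr2.
rewrite /index_iota subn1 big_mkcond [X in _ <= X]big_mkcond /=.
apply: ler_sum => tau _; rewrite /Q /Pp.
case: (acts tau == a) => //=; case: (_ && _) => //.
by have /andP [] := sig2_bd Pp l0 gl tau.
Qed.
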